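(* For every $m\ge0$ and $n\ge1$ there is an injective map from $Q_4(m,n)$ to $P_4(-m,n)$.
   Context: Partitions: $\lambda_1\ge\cdots\ge\lambda_\ell>0$, $\ell(\lambda)=\ell$, $\lambda_i=0$ for $i>\ell$, $s(\lambda)$ the smallest part with $s(\emptyset)=+\infty$. Rank $=\lambda_1-\ell$; rank-set $=[-\lambda_1,1-\lambda_2,\dots,\ell-1-\lambda_\ell,\ell,\ell+1,\dots]$. $Q(m,n)$: partitions of $n$ whose rank-set contains $m$; $P(-m,n)$: partitions of $n$ with rank $\ge-m$. $m$-Durfee rectangle symbol $(\alpha,\beta)_{(m+j)\times j}$ of $\lambda$: $j\ge0$ is the largest integer with $\lambda_{m+j}\ge j$; $\alpha$ is the conjugate of $(\lambda_1-j,\dots,\lambda_{m+j}-j)$ and $\beta=(\lambda_{m+j+1},\lambda_{m+j+2},\dots)$; $|\lambda|=|\alpha|+|\beta|+j(m+j)$. $Q_4(m,n)$ is the set of $\lambda\in Q(m,n)$ whose symbol has $j\ge1$, $\ell(\beta)-\ell(\alpha)\ge1$, $\alpha_1=m+j>\alpha_2$ and $s(\beta)\ge2$. $P_4(-m,n)$ is the set of $\mu\in P(-m,n)$ whose symbol $(\gamma,\delta)_{(m+j')\times j'}$ has $j'\ge1$, $\ell(\gamma)=\ell(\delta)$, $\gamma_1=m+j'-1$, $\delta_1=j'$, and $\delta$ has a part equal to $2$. *)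

(* Defs.v *)
(* Partitions are represented as seq nat (parts listed in
   nonincreasing order, all positive); lambda_i = nth 0 l i.-1 for i >= 1. *)
From mathcomp Require Import all_boot.
Set Implicit Arguments. Unset Strict Implicit. Unset Printing Implicit Defensive.

Definition is_part (l : seq nat) : bool :=
  sorted geq l && all (fun x => 0 < x) l.

Definition partition_of (n : nat) (l : seq nat) : bool :=
  is_part l && (sumn l == n).

(* smallest part >= 2 (s(empty) = +infinity, so vacuous for empty) *)
Definition smallest_ge2 (l : seq nat) : bool := all (fun x => 2 <= x) l.

(* m (>= 0) belongs to the rank-set
   [-l_1, 1-l_2, ..., ell-1-l_ell, ell, ell+1, ...]:
   either m >= ell, or m = (k-1) - l_k for some 1 <= k <= ell
   (0-indexed: i = m + l_{i+1} for some i < ell). *)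
Definition in_rankset (m : nat) (l : seq nat) : bool :=
  (size l <= m) || [exists i : 'I_(size l), val i == m + nth 0 l i].

(* rank = l_1 - ell >= -m *)
Definition rank_ge_neg (m : nat) (l : seq nat) : bool :=
  size l <= m + head 0 l.

Definition Q (m n : nat) (l : seq nat) : bool :=
  partition_of n l && in_rankset m l.

Definition P (m n : nat) (l : seq nat) : bool :=
  partition_of n l && rank_ge_neg m l.

Definition conj_part (l : seq nat) : seq nat :=
  mkseq (fun i => count (fun x => i < x) l) (foldr maxn 0 l).

(* m-Durfee rectangle: largest j >= 0 with lambda_{m+j} >= j
   (j = 0 always qualifies; any qualifying j >= 1 satisfies j <= ell). *)
Definition durfee (m : nat) (l : seq nat) : nat :=
  \max_(j < (size l).+1 | (val j == 0) || (val j <= nth 0 l (m + j).-1)) val j.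

Definition dalpha (m : nat) (l : seq nat) : seq nat :=
  conj_part [seq x - durfee m l | x <- take (m + durfee m l) l].

Definition dbeta (m : nat) (l : seq nat) : seq nat :=
  drop (m + durfee m l) l.

Definition Q4 (m n : nat) (l : seq nat) : bool :=
  let j := durfee m l in
  let a := dalpha m l in
  let b := dbeta m l in
  [&& Q m n l, 1 <= j, size a < size b,
      nth 0 a 0 == m + j, nth 0 a 1 < m + j & smallest_ge2 b].

Definition P4 (m n : nat) (mu : seq nat) : bool :=
  let j := durfee m mu in
  let g := dalpha m mu in
  let d := dbeta m mu in
  [&& P m n mu, 1 <= j, size g == size d,
      nth 0 g 0 == (m + j).-1, nth 0 d 0 == j & 2 \in d].

(* Main.v *)
Require Import Defs.
From mathcomp Require Import all_boot zify.
Set Implicit Arguments. Unset Strict Implicit. Unset Printing Implicit Defensive.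

Lemma geq_tr : transitive geq.
Proof. by move=> a b c /= H1 H2; apply: leq_trans H2 H1. Qed.

Lemma snth (s : seq nat) i k : sorted geq s -> i <= k -> k < size s ->
  nth 0 s k <= nth 0 s i.
Proof.
move=> Hs Hik Hk.
have := sorted_leq_nth geq_tr (fun x => leqnn x) 0 Hs.
move=> H; apply: (H i k) => //; rewrite inE; lia.
Qed.

Lemma snthP (s : seq nat) :
  (forall i, i.+1 < size s -> nth 0 s i.+1 <= nth 0 s i) -> sorted geq s.
Proof. by move=> H; apply/(sortedP 0) => i Hi; apply: H. Qed.

Lemma sorted_geq_nth (s : seq nat) : sorted geq s ->
  forall i, i.+1 < size s -> nth 0 s i.+1 <= nth 0 s i.
Proof. by move/(sortedP 0). Qed.

Lemma cnt_split x (s : seq nat) : 0 < x ->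
  count (fun y => x.-1 < y) s = count_mem x s + count (fun y => x < y) s.
Proof.
move=> Hx; elim: s => //= a s ->.
have E : ((x.-1 < a) : nat) = (a == x) + (x < a).
  by case: (eqVneq a x) => [->|Hne]; [lia | move/eqP: Hne; lia].
lia.
Qed.

Lemma cnt0 (s : seq nat) :
  size s = count_mem 0 s + count (fun y => 0 < y) s.
Proof. by elim: s => //= a s ->; case: a => [|a] /=; lia. Qed.

Lemma conj_inj (s1 s2 : seq nat) : sorted geq s1 -> sorted geq s2 ->
  size s1 = size s2 ->
  (forall k, count (fun x => k < x) s1 = count (fun x => k < x) s2) -> s1 = s2.
Proof.
move=> H1 H2 Hsz Hc.
have Hm : forall x, count_mem x s1 = count_mem x s2.
  case=> [|x].
  - have := cnt0 s1; have := cnt0 s2; rewrite Hc Hsz; lia.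
  - have := cnt_split s1 (ltn0Sn x); have := cnt_split s2 (ltn0Sn x).
    rewrite /= Hc Hc; lia.
apply: (sorted_eq geq_tr) => //.
- by move=> a b /andP [] /= ? ?; apply/eqP; rewrite eqn_leq; apply/andP.
- by rewrite /perm_eq; apply/allP => x _ /=; rewrite Hm.
Qed.

Lemma sumn_rcons s x : sumn (rcons s x) = sumn s + x.
Proof. by rewrite -cats1 sumn_cat /=; lia. Qed.

Lemma sumn_mkseqD f g N :
  sumn (mkseq (fun k => f k + g k) N) = sumn (mkseq f N) + sumn (mkseq g N).
Proof. elim: N => // N IH; rewrite !mkseqS !sumn_rcons IH; lia. Qed.

Lemma sumn_ind x N : sumn (mkseq (fun k => ((k < x) : nat)) N) = minn x N.
Proof.
elim: N => [|N IH]; first by rewrite /=; lia.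
rewrite mkseqS sumn_rcons IH; case: (ltnP N x) => /= H; lia.
Qed.

Lemma sumn_cnt (s : seq nat) N : all (fun x => x <= N) s ->
  sumn s = sumn (mkseq (fun k => count (fun x => k < x) s) N).
Proof.
elim: s => [|a s IH] /=.
- by move=> _; elim: N => // N IH; rewrite mkseqS sumn_rcons -IH.
- move=> /andP [Ha Hs].
  rewrite sumn_mkseqD sumn_ind -IH //; lia.
Qed.

Lemma snth0 (s : seq nat) i k : sorted geq s -> i <= k -> nth 0 s k <= nth 0 s i.
Proof.
move=> Hs Hik; case: (ltnP k (size s)) => Hk; first exact: snth.
by rewrite nth_default.
Qed.

Definition condy (P S : seq nat) (y : nat) : bool :=
  (nth 0 S y <= nth 0 P y) && ((y == 0) || (nth 0 P y.+1 <= nth 0 S y.-1)).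
Definition ychoice (P S : seq nat) (r : nat) : nat :=
  \max_(y < r.+1 | condy P S y) y.
Definition swR (P S : seq nat) y := take y S ++ drop y.+1 P.
Definition swD (P S : seq nat) y := take y.+1 P ++ drop y S.

Section Swap.
Variables (P S : seq nat) (r : nat).
Hypotheses (HP : sorted geq P) (HS : sorted geq S) (HSz : size S = r)
  (HPz : r < size P).

Lemma cond_exists : exists2 y, y <= r & condy P S y.
Proof.
suff H : forall y, y <= r -> nth 0 S y <= nth 0 P y -> exists2 y', y' <= y & condy P S y'.
  have Hr : nth 0 S r <= nth 0 P r by rewrite nth_default ?HSz.
  have [y' H1 H2] := H r (leqnn r) Hr.
  by exists y'.
elim=> [|y IH] Hy Hc.
- by exists 0 => //; rewrite /condy Hc.
- case: (leqP (nth 0 S y) (nth 0 P y)) => H.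
  + have [y' H1 H2] := IH (ltnW Hy) H; exists y' => //; lia.
  + exists y.+1 => //; rewrite /condy Hc /=.
    have Hyy : y <= y.+2 by lia.
    have := @snth0 P y y.+2 HP Hyy; lia.
Qed.

Lemma ychoice_spec : [/\ ychoice P S r <= r, condy P S (ychoice P S r) &
  forall y, y <= r -> condy P S y -> y <= ychoice P S r].
Proof.
have [y0 Hy0 Hc0] := cond_exists.
have Hcard : 0 < #|[pred i : 'I_r.+1 | condy P S i]|.
  have Hy0' : y0 < r.+1 by lia.
  apply/card_gt0P; exists (Ordinal Hy0'); by rewrite inE.
have [i0 Hi0 Heq] := eq_bigmax_cond (fun i : 'I_r.+1 => val i) Hcard.
rewrite /ychoice.
have -> : \max_(y < r.+1 | condy P S y) y = \max_(i in [pred i : 'I_r.+1 | condy P S i]) val i.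
  by apply: eq_bigl.
rewrite Heq; split.
- by rewrite -ltnS ltn_ord.
- by move: Hi0; rewrite inE.
- move=> y Hy Hc; rewrite -Heq.
  have Hy' : y < r.+1 by lia.
  have := @leq_bigmax_cond _ [pred i : 'I_r.+1 | condy P S i] (fun i => val i)
     (Ordinal Hy'); rewrite inE /=; by apply.
Qed.


Lemma nth_swD y i : y <= r ->
  nth 0 (swD P S y) i = if i <= y then nth 0 P i else nth 0 S i.-1.
Proof.
move=> Hy; rewrite /swD nth_cat size_take.
have -> : (if y.+1 < size P then y.+1 else size P) = y.+1.
  by case: ifP => // ?; lia.
rewrite ltnS; case: ifP => H; first by rewrite nth_take.
rewrite nth_drop; congr nth; lia.
Qed.

Lemma nth_swR y i : y <= r ->
  nth 0 (swR P S y) i = if i < y then nth 0 S i else nth 0 P i.+1.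
Proof.
move=> Hy; rewrite /swR nth_cat size_take.
have -> : (if y < size S then y else size S) = y.
  by case: ifP => // ?; lia.
case: ifP => H; first by rewrite nth_take.
rewrite nth_drop; congr nth; lia.
Qed.

Lemma size_swD y : y <= r -> size (swD P S y) = r.+1.
Proof. move=> Hy; rewrite /swD size_cat size_take size_drop; case: ifP => ?; lia. Qed.

Lemma size_swR y : y <= r -> size (swR P S y) = (size P).-1.
Proof. move=> Hy; rewrite /swR size_cat size_take size_drop; case: ifP => ?; lia. Qed.

Lemma sumn_sw y : y <= r ->
  sumn (swR P S y) + sumn (swD P S y) = sumn P + sumn S.
Proof.
move=> Hy; rewrite /swR /swD !sumn_cat.
rewrite -[sumn P](congr1 sumn (cat_take_drop y.+1 P)) sumn_cat.
rewrite -[sumn S](congr1 sumn (cat_take_drop y S)) sumn_cat; lia.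
Qed.

Lemma sorted_swD y : y <= r -> condy P S y -> sorted geq (swD P S y).
Proof.
move=> Hy /andP [Hc1 Hc2]; apply: snthP => i; rewrite size_swD // => Hi.
rewrite !nth_swD //.
case: (leqP i.+1 y) => H1; first by rewrite (_ : i <= y) ?(snth0 HP) //; lia.
case: (leqP i y) => H2.
- have Ei : i = y by lia. subst i. by rewrite /=.
- have := @snth0 S i.-1 i HS (leq_pred i). by rewrite /=.
Qed.

Lemma sorted_swR y : y <= r -> condy P S y -> sorted geq (swR P S y).
Proof.
move=> Hy /andP [Hc1 Hc2]; apply: snthP => i; rewrite size_swR // => Hi.
rewrite !nth_swR //.
case: (ltnP i.+1 y) => H1; first by rewrite (_ : i < y) ?(snth0 HS) //; lia.
case: (ltnP i y) => H2.
- have Ei : i.+1 = y by lia. subst y. by move: Hc2 => /=.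
- exact: snth0.
Qed.

Lemma bound_swD y c : y <= r -> condy P S y -> all (fun x => x <= c) P ->
  all (fun x => x <= c) (swD P S y).
Proof.
move=> Hy /andP [Hc1 Hc2] /(all_nthP 0) HPc; apply/(all_nthP 0) => i.
rewrite size_swD // nth_swD // => Hi; case: ifP => H.
- apply: HPc; lia.
- have Hle : y <= i.-1 by lia.
  have H1 := @snth0 S y i.-1 HS Hle.
  have : nth 0 P y <= c by apply: HPc; lia.
  lia.
Qed.

Lemma bound_swR y c : y <= r -> all (fun x => x <= c) P ->
  all (fun x => x <= c) S -> all (fun x => x <= c) (swR P S y).
Proof.
move=> Hy /(all_nthP 0) HPc /(all_nthP 0) HSc; apply/(all_nthP 0) => i.
rewrite size_swR // nth_swR // => Hi; case: ifP => H; [apply: HSc | apply: HPc]; lia.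
Qed.

Lemma cond_sw y : y <= r -> condy P S y -> forall y', y' <= r ->
  condy (swD P S y) (swR P S y) y' = condy P S y'.
Proof.
move=> Hy Hc y' Hy'; rewrite /condy !nth_swD ?nth_swR //.
case: (ltngtP y' y) => H.
- have E1 : (y' <= y) = true by lia.
  have E2 : (y'.-1 < y) = true by lia.
  by rewrite ?E1 ?E2.
- have E0 : (y' < y) = false by lia.
  have E1 : (y' <= y) = false by lia.
  have E2 : (y'.-1 < y) = false by lia.
  rewrite ?E0 ?E1 ?E2.
  case: y' H Hy' {E0 E1 E2} => [|y''] H Hy' /=; first by lia.
  by rewrite andbC.
- subst y'. rewrite ?ltnn ?leqnn.
  move: Hc; rewrite /condy => /andP [Hc1 Hc2]; rewrite Hc1 Hc2.
  rewrite (snth0 HP (leqnSn y)) /=.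
  case: y Hy Hy' Hc1 Hc2 => //= y Hy _ _ _.
  by rewrite ltnSn (snth0 HS (leqnSn y)).
Qed.



Lemma swap_inv y : y <= r ->
  swD (swD P S y) (swR P S y) y = P /\ swR (swD P S y) (swR P S y) y = S.
Proof.
move=> Hy; rewrite /swD /swR.
have E1 : size (take y.+1 P) = y.+1 by rewrite size_takel; lia.
have E2 : size (take y S) = y by rewrite size_takel; lia.
by rewrite !take_size_cat // !drop_size_cat // !cat_take_drop.
Qed.

End Swap.

Lemma ychoice_eq P S P' S' r :
  (forall y, y <= r -> condy P' S' y = condy P S y) -> ychoice P' S' r = ychoice P S r.
Proof.
move=> H; rewrite /ychoice; apply: eq_bigl => i /=; apply: H.
by rewrite -ltnS ltn_ord.
Qed.

Lemma ychoice_sw P S r : sorted geq P -> sorted geq S -> size S = r -> r < size P ->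
  ychoice (swD P S (ychoice P S r)) (swR P S (ychoice P S r)) r = ychoice P S r.
Proof.
move=> HP HS HSz HPz.
have [Hy1 Hy2 _] := ychoice_spec HP HS HSz HPz.
apply: ychoice_eq => y' Hy'; exact: (cond_sw HP HS HSz HPz Hy1 Hy2 Hy').
Qed.

Lemma sw_inj P1 S1 P2 S2 r :
  sorted geq P1 -> sorted geq S1 -> size S1 = r -> r < size P1 ->
  sorted geq P2 -> sorted geq S2 -> size S2 = r -> r < size P2 ->
  swR P1 S1 (ychoice P1 S1 r) = swR P2 S2 (ychoice P2 S2 r) ->
  swD P1 S1 (ychoice P1 S1 r) = swD P2 S2 (ychoice P2 S2 r) ->
  P1 = P2 /\ S1 = S2.
Proof.
move=> HP1 HS1 HSz1 HPz1 HP2 HS2 HSz2 HPz2 ER ED.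
have E1 := ychoice_sw HP1 HS1 HSz1 HPz1.
have E2 := ychoice_sw HP2 HS2 HSz2 HPz2.
have [Hy1 _ _] := ychoice_spec HP1 HS1 HSz1 HPz1.
have [Hy2 _ _] := ychoice_spec HP2 HS2 HSz2 HPz2.
have Ey : ychoice P1 S1 r = ychoice P2 S2 r.
  by rewrite -E1 ER ED E2.
have [I1 I2] := swap_inv HP1 HS1 HSz1 HPz1 Hy1.
have [J1 J2] := swap_inv HP2 HS2 HSz2 HPz2 Hy2.
split.
- by rewrite -[LHS]I1 -[RHS]J1 ER ED Ey.
- by rewrite -[LHS]I2 -[RHS]J2 ER ED Ey.
Qed.

Lemma durfee_le m l : durfee m l <= size l.
Proof.
rewrite /durfee; apply/bigmax_leqP => i _; by rewrite -ltnS ltn_ord.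
Qed.

Lemma durfee_max m l j' : j' <= size l -> j' <= nth 0 l (m + j').-1 ->
  j' <= durfee m l.
Proof.
move=> H1 H2; rewrite /durfee.
have Hj : j' < (size l).+1 by lia.
have := @leq_bigmax_cond _ (fun j : 'I_(size l).+1 => (val j == 0) || (val j <= nth 0 l (m + j).-1))
   (fun i => val i) (Ordinal Hj); rewrite /= H2 orbT; by apply.
Qed.

Lemma durfee_q m l : 0 < durfee m l -> durfee m l <= nth 0 l (m + durfee m l).-1.
Proof.
set A := (fun j : 'I_(size l).+1 => (val j == 0) || (val j <= nth 0 l (m + j).-1)).
have Hcard : 0 < #|[pred i : 'I_(size l).+1 | A i]|.
  apply/card_gt0P; exists ord0; by rewrite inE /A eqxx.
have [i0 Hi0 Heq] := eq_bigmax_cond (fun i : 'I_(size l).+1 => val i) Hcard.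
have E : durfee m l = val i0.
  rewrite /durfee -Heq; by apply: eq_bigl.
rewrite E => Hpos; move: Hi0; rewrite inE /A => /orP [/eqP H|//]; by rewrite H in Hpos.
Qed.

Lemma durfeeE m l j : sorted geq l -> j <= size l -> (0 < j -> j <= nth 0 l (m + j).-1) ->
  nth 0 l (m + j) <= j -> durfee m l = j.
Proof.
move=> Hs H1 H2 H3; apply/eqP; rewrite eqn_leq; apply/andP; split.
- rewrite /durfee; apply/bigmax_leqP => i /orP [/eqP -> //|Hi].
  case: i Hi => i /= _ Hi.
  case: (leqP i j) => // Hlt.
  have Hle : m + j <= (m + i).-1 by lia.
  have := snth0 Hs Hle; lia.
- case: j H1 H2 H3 => [|j] H1 H2 H3 //; apply: durfee_max => //; exact: H2.
Qed.

Lemma maxE (s : seq nat) : sorted geq s -> foldr maxn 0 s = head 0 s.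
Proof.
elim: s => //= a s IH Hs.
rewrite IH; last by move: Hs; case: s {IH} => //= b s /andP [].
case: s Hs {IH} => [|b s] /=; first by lia.
move=> /andP [Hb _]; lia.
Qed.

Lemma size_conj s : size (conj_part s) = foldr maxn 0 s.
Proof. by rewrite /conj_part size_mkseq. Qed.

Lemma nth_conj s i : nth 0 (conj_part s) i =
  if i < foldr maxn 0 s then count (fun x => i < x) s else 0.
Proof.
rewrite /conj_part; case: ifP => H; first by rewrite nth_mkseq.
by rewrite nth_default // size_mkseq; lia.
Qed.

Lemma mkseqS0 (f : nat -> nat) n : mkseq f n.+1 = f 0 :: mkseq (fun k => f k.+1) n.
Proof.
rewrite /mkseq /= -[in iota 1 n](addn0 1) iotaDl -map_comp; congr (_ :: _).
Qed.

Lemma cat_inj (s1 s2 t1 t2 : seq nat) : size s1 = size s2 -> s1 ++ t1 = s2 ++ t2 ->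
  s1 = s2 /\ t1 = t2.
Proof.
move=> Hs /eqP; rewrite eqseq_cat // => /andP [/eqP -> /eqP ->]; done.
Qed.

Lemma count_le_size (p : pred nat) s : count p s <= size s.
Proof. exact: count_size. Qed.

Lemma sorted_cnt (s : seq nat) k : sorted geq s -> count (fun x => k < x) s = size s ->
  True.
Proof. done. Qed.

Definition sig_of (j : nat) (Bt : seq nat) : seq nat :=
  mkseq (fun i => count (fun x => i.+2 < x) Bt) (j - 2).

Definition dprime (Dd : seq nat) : seq nat := (head 0 Dd).+1 :: behead Dd.

Definition Dt_of (c1 : nat) (Dd : seq nat) : seq nat :=
  mkseq (fun k => (count (fun x => k < x) (dprime Dd)).+1) c1.

Definition gmap (j : nat) (Pt Bt : seq nat) : seq nat :=
  let S := sig_of j Bt in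
  let y := ychoice Pt S (j - 2) in
  (j + (size Bt).+1) :: [seq x + j.+1 | x <- swR Pt S y] ++
     j :: j :: Dt_of (size Bt) (swD Pt S y).

Definition rebuild (j : nat) (Pt Bt : seq nat) : seq nat :=
  [seq x + j.+1 | x <- Pt] ++ j.+1 :: j :: Bt.

Definition fmap (m : nat) (l : seq nat) : seq nat :=
  let j := durfee m l in
  gmap j [seq x - j.+1 | x <- take (m + j).-1 l] (drop (m + j).+1 l).

Definition valid (m j : nat) (Pt Bt : seq nat) : Prop :=
  [/\ 2 <= j, size Pt = (m + j).-1, sorted geq Pt, all (fun x => x < size Bt) Pt &
      sorted geq Bt /\ all (fun x => 2 <= x <= j) Bt].

Lemma sorted_sig j Bt : sorted geq (sig_of j Bt).
Proof.
apply: snthP => i; rewrite size_mkseq => Hi.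
rewrite !nth_mkseq; try lia.
apply: sub_count => x /=; lia.
Qed.

Lemma bound_sig j Bt : all (fun x => x <= size Bt) (sig_of j Bt).
Proof. apply/allP => x /mapP [k _ ->]; exact: count_size. Qed.

Lemma size_sig j Bt : size (sig_of j Bt) = j - 2.
Proof. by rewrite size_mkseq. Qed.

Section Construction.
Variables (m j : nat) (Pt Bt : seq nat).
Hypothesis (V : valid m j Pt Bt).

Let S := sig_of j Bt.
Let y := ychoice Pt S (j - 2).
Let R := swR Pt S y.
Let Dd := swD Pt S y.
Let c1 := size Bt.

Lemma V_r : j - 2 < size Pt.
Proof. case: V => *; lia. Qed.

Lemma V_y : [/\ y <= j - 2, condy Pt S y &
  (forall y', y' <= j - 2 -> condy Pt S y' -> y' <= y)].
Proof. case: V => *; apply: ychoice_spec => //; [exact: sorted_sig | exact: size_sig | exact: V_r]. Qed.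

Ltac swt := (case: V => *; case: V_y => *;
  first [exact: sorted_sig | exact: size_sig | exact: V_r | done | idtac]).

Lemma size_R : size R = (m + j).-1.-1.
Proof.
case: V => H1 H2 *; case: V_y => Hy *; rewrite /R (size_swR (r := j - 2)) //.
- by rewrite H2.
- exact: sorted_sig.
- exact: size_sig.
- exact: V_r.
Qed.

Lemma V_c1 : 0 < c1.
Proof.
case: V => H1 H2 H3 H4 _; move: H4; rewrite /c1.
case: Pt H2 => [|a Pt'] /= H2; first by lia.
by move=> /andP [Ha _]; lia.
Qed.

Lemma F_R : [/\ sorted geq R, size R = (m + j).-2 & all (fun x => x <= c1) R].
Proof.
have HS := sorted_sig j Bt; have HSz := size_sig j Bt; have Hr := V_r.
case: V => H1 H2 H3 H4 _; case: V_y => Hy Hc _; split.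
- exact: (sorted_swR H3 HS HSz Hr Hy Hc).
- by rewrite /R (size_swR H3 HS HSz Hr Hy) H2.
- apply: (bound_swR H3 HS HSz Hr Hy).
  + by apply: sub_all H4 => x /= Hx; lia.
  + exact: bound_sig.
Qed.

Lemma F_D : [/\ sorted geq Dd, size Dd = (j - 2).+1, all (fun x => x <= c1.-1) Dd &
   sumn R + sumn Dd = sumn Pt + sumn S].
Proof.
have HS := sorted_sig j Bt; have HSz := size_sig j Bt; have Hr := V_r.
case: V => H1 H2 H3 H4 _; case: V_y => Hy Hc _; split.
- exact: (sorted_swD H3 HS HSz Hr Hy Hc).
- exact: (size_swD H3 HS HSz Hr Hy).
- apply: (bound_swD H3 HS HSz Hr Hy Hc).
  by apply: sub_all H4 => x /= Hx; rewrite /c1; lia.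
- exact: (sumn_sw H3 HS HSz Hr Hy).
Qed.

Let d' := dprime Dd.

Lemma F_d : [/\ sorted geq d', size d' = j.-1, all (fun x => x <= c1) d',
   sumn d' = (sumn Dd).+1 & count (fun x => head 0 Dd < x) d' = 1].
Proof.
have [Hs Hsz Hb _] := F_D.
have H1 : 2 <= j by case: V.
have Hc1 := V_c1.
rewrite /d' /dprime; case: Dd Hs Hsz Hb => [|a D] //= Hs Hsz /andP [Ha Hb].
split.
- case: D Hs {Hsz Hb} => //= b D /andP [Hab ->]; rewrite andbT; lia.
- lia.
- apply/andP; split; first lia.
  by apply: sub_all Hb => x /=; lia.
- lia.
- have HD : all (fun x => x <= a) D.
    apply/allP => x Hx.
    have := order_path_min geq_tr Hs; move/allP => /(_ x Hx); done.
  have E : count (fun x => a < x) D = 0.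
    elim: D {Hs Hsz Hb} HD => //= b D IH /andP [Hb HD]; rewrite IH //; lia.
  move: E => /= ->; lia.
Qed.

Let Dt := Dt_of c1 Dd.

Lemma F_Dt : [/\ sorted geq Dt, size Dt = c1, all (fun x => 1 <= x <= j) Dt,
   2 \in Dt & sumn Dt = c1 + (sumn Dd).+1].
Proof.
have [Hs Hsz Hb Hsum Hcnt] := F_d.
have [_ HDsz HDb _] := F_D.
have H1 : 2 <= j by case: V.
have Hc1 := V_c1.
split.
- apply: snthP => i; rewrite /Dt /Dt_of size_mkseq => Hi; rewrite !nth_mkseq; try lia.
  rewrite ltnS; apply: sub_count => x /=; lia.
- by rewrite size_mkseq.
- apply/allP => x /mapP [k _ ->]; apply/andP; split => //.
  have := count_size (fun x => k < x) d'; rewrite Hsz -/d'; lia.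
- apply/mapP; exists (head 0 Dd).
  + rewrite mem_iota /=. have : head 0 Dd <= c1.-1.
      case: (Dd) HDb => //= a s /andP []; done.
    lia.
  + by rewrite Hcnt.
- rewrite /Dt /Dt_of.
  rewrite (eq_mkseq (g := fun k => 1 + count (fun x => k < x) d')) //.
  rewrite sumn_mkseqD -(sumn_cnt (N := c1)) // Hsum.
  congr addn; elim: (c1) => // n IH; rewrite mkseqS sumn_rcons IH; lia.
Qed.

Lemma F_B : sumn Bt = 2 * c1 + sumn S.
Proof.
case: V => H1 _ _ _ [HBs HBb].
rewrite (sumn_cnt (N := j)); last by apply: sub_all HBb => x /andP [].
have -> : j = (j - 2).+2 by lia.
rewrite !mkseqS0 /=.
have E0 : count (fun x => 0 < x) Bt = c1.
  apply/eqP; rewrite -all_count; apply: sub_all HBb => x /andP [] *; lia.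
have E1 : count (fun x => 1 < x) Bt = c1.
  apply/eqP; rewrite -all_count; apply: sub_all HBb => x /andP [] *; lia.
rewrite E0 E1 /S /sig_of; lia.
Qed.


Lemma G_eq : gmap j Pt Bt = (j + c1.+1) :: [seq x + j.+1 | x <- R] ++ j :: j :: Dt.
Proof. done. Qed.

Lemma G_sorted : sorted geq (gmap j Pt Bt).
Proof.
have [HRs HRsz HRb] := F_R. have [HDs HDsz HDall H2in HDsum] := F_Dt.
rewrite G_eq /= cat_path; apply/andP; split.
- rewrite (path_sortedE geq_tr); apply/andP; split.
  + apply/allP => x /mapP [z Hz ->]; move/allP: HRb => /(_ z Hz) /=; lia.
  + by apply: homo_sorted HRs => a b /=; lia.
- have Hl : j <= last (j + c1.+1) [seq x + j.+1 | x <- R].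
    have := mem_last (j + c1.+1) [seq x + j.+1 | x <- R].
    rewrite inE => /orP [/eqP ->|/mapP [z _ ->]]; lia.
  rewrite /= Hl leqnn /= (path_sortedE geq_tr) HDs andbT.
  by apply: sub_all HDall => x /= /andP [].
Qed.

Lemma G_pos : all (fun x => 0 < x) (gmap j Pt Bt).
Proof.
have [HDs HDsz HDall H2in HDsum] := F_Dt. have H1 : 2 <= j by case: V.
rewrite G_eq /= all_cat /=.
have -> : 0 < j by lia.
have -> : 0 < j + c1.+1 by lia.
rewrite /=; apply/andP; split.
- by apply/allP => x /mapP [z _ ->]; lia.
- by apply: sub_all HDall => x /= /andP [].
Qed.

Lemma G_sum : sumn (gmap j Pt Bt) = sumn (rebuild j Pt Bt).
Proof.
have [HRs HRsz HRb] := F_R. have [HDs HDsz HDall H2in HDsum] := F_Dt.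
have [_ _ _ Hsw] := F_D. have HB := F_B.
have [H1 H2 _ _ _] := V.
rewrite G_eq /rebuild /= !sumn_cat /= HDsum HB.
have Ef : forall s : seq nat, sumn [seq x + j.+1 | x <- s] = sumn s + size s * j.+1.
  by elim=> //= a s' ->; lia.
rewrite !Ef HRsz H2.
have -> : (m + j).-1 = ((m + j).-2).+1 by lia.
rewrite mulSn. rewrite -/c1. lia.
Qed.

Lemma all_cnt (p : pred nat) s : all p s -> count p s = size s.
Proof. by rewrite all_count => /eqP. Qed.

Lemma maxn_top a (s : seq nat) : all (fun x => x <= a) s -> foldr maxn 0 (a :: s) = a.
Proof.
move=> H; rewrite /=; suff : foldr maxn 0 s <= a by lia.
elim: s H => //= b s IH /andP [Hb Hs]; have := IH Hs; lia.
Qed.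

Lemma G_P4 : durfee m (gmap j Pt Bt) = j /\ P4 m (sumn (rebuild j Pt Bt)) (gmap j Pt Bt).
Proof.
have [HRs HRsz HRb] := F_R. have [HDs HDsz HDall H2in HDsum] := F_Dt.
have [H1 H2 _ _ _] := V.
have Hsorted := G_sorted.
set K := (m + j).-2.
have EK : m + j = K.+2 by rewrite /K; lia.
have HRK : size R = K by rewrite HRsz.
have Hdur : durfee m (gmap j Pt Bt) = j.
  apply: durfeeE => //.
  - rewrite G_eq /= size_cat size_map /= HRK HDsz; lia.
  - move=> _; rewrite G_eq EK /= nth_cat size_map HRK ltnn subnn /=; lia.
  - rewrite G_eq EK /= nth_cat size_map HRK (_ : K.+1 < K = false); last lia.
    by rewrite (_ : K.+1 - K = 1) /=; lia.
split => //.
rewrite /P4 Hdur /dalpha /dbeta Hdur EK.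
have Etake : take K.+2 (gmap j Pt Bt) = (j + c1.+1) :: [seq x + j.+1 | x <- R] ++ [:: j].
  rewrite G_eq /= take_cat size_map HRK (_ : K.+1 < K = false); last lia.
  by rewrite (_ : K.+1 - K = 1) //; lia.
have Edrop : drop K.+2 (gmap j Pt Bt) = j :: Dt.
  rewrite G_eq /= drop_cat size_map HRK (_ : K.+1 < K = false); last lia.
  by rewrite (_ : K.+1 - K = 1) //; lia.
rewrite Etake Edrop /= map_cat /=.
have Hs1 : all (fun x => x <= c1.+1) ([seq x - j | x <- [seq x + j.+1 | x <- R]] ++ [:: j - j]).
  rewrite all_cat /= andbT; apply/andP; split; last lia.
  apply/allP => x /mapP [z /mapP [w Hw ->] ->]; move/allP: HRb => /(_ w Hw); lia.
have Emax : foldr maxn 0 ((j + c1.+1 - j) :: ([seq x - j | x <- [seq x + j.+1 | x <- R]] ++ [:: j - j])) = c1.+1.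
  rewrite (_ : j + c1.+1 - j = c1.+1); last lia. exact: maxn_top.
have Hcnt : count (fun x => 0 < x) ((j + c1.+1 - j) :: ([seq x - j | x <- [seq x + j.+1 | x <- R]] ++ [:: j - j])) = K.+1.
  rewrite /= count_cat /= subnn /=.
  have -> : count (fun x => 0 < x) [seq x - j | x <- [seq x + j.+1 | x <- R]] = size R.
    rewrite all_cnt ?size_map //; apply/allP => x /mapP [z /mapP [w _ ->] ->]; lia.
  rewrite HRK; lia.
rewrite /partition_of /P /rank_ge_neg.
apply/and5P; split.
- apply/andP; split.
  + rewrite /partition_of /is_part Hsorted G_pos G_sum eqxx //.
  + rewrite G_eq /= size_cat size_map HRK /= HDsz; lia.
- lia.
- rewrite size_conj Emax /= HDsz; done.
- by rewrite nth_conj Emax ltn0Sn Hcnt.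
- by rewrite eqxx inE H2in orbT.
Qed.

End Construction.

Lemma dprime_inj (D1 D2 : seq nat) : 0 < size D1 -> 0 < size D2 ->
  dprime D1 = dprime D2 -> D1 = D2.
Proof. by case: D1 => // a D1; case: D2 => // b D2 _ _ [-> ->]. Qed.

Lemma Dt_inj c1 (D1 D2 : seq nat) :
  sorted geq (dprime D1) -> sorted geq (dprime D2) ->
  size (dprime D1) = size (dprime D2) ->
  all (fun x => x <= c1) (dprime D1) -> all (fun x => x <= c1) (dprime D2) ->
  Dt_of c1 D1 = Dt_of c1 D2 -> dprime D1 = dprime D2.
Proof.
move=> H1 H2 Hsz B1 B2 E; apply: conj_inj => // k.
case: (ltnP k c1) => Hk.
- have := congr1 (fun s => nth 0 s k) E; rewrite /Dt_of !nth_mkseq //; by case.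
- have Z : forall D : seq nat, all (fun x => x <= c1) D -> count (fun x => k < x) D = 0.
    move=> D HD; apply/eqP; rewrite -leqn0 leqNgt -has_count; apply/hasPn => x Hx /=.
    move/allP: HD => /(_ x Hx); lia.
  by rewrite !Z.
Qed.

Lemma sig_inj j (B1 B2 : seq nat) : sorted geq B1 -> sorted geq B2 -> size B1 = size B2 ->
  all (fun x => 2 <= x <= j) B1 -> all (fun x => 2 <= x <= j) B2 ->
  sig_of j B1 = sig_of j B2 -> B1 = B2.
Proof.
move=> H1 H2 Hsz HB1 HB2 E; apply: conj_inj => // k.
case: (ltnP k 2) => Hk2.
- rewrite !all_cnt ?Hsz //.
  + by apply: sub_all HB2 => x /andP [] *; lia.
  + by apply: sub_all HB1 => x /andP [] *; lia.
case: (ltnP k j) => Hkj.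
- have := congr1 (fun s => nth 0 s (k - 2)) E; rewrite /sig_of !nth_mkseq; try lia.
  by rewrite (_ : (k - 2).+2 = k) //; lia.
- have Z : forall D : seq nat, all (fun x => 2 <= x <= j) D -> count (fun x => k < x) D = 0.
    move=> D HD; apply/eqP; rewrite -leqn0 leqNgt -has_count; apply/hasPn => x Hx /=.
    move/allP: HD => /(_ x Hx); lia.
  by rewrite !Z.
Qed.

Lemma map_addn_inj a (s1 s2 : seq nat) : [seq x + a | x <- s1] = [seq x + a | x <- s2] -> s1 = s2.
Proof. by apply: inj_map => x y; apply: addIn. Qed.

Lemma G_inj m j1 P1 B1 j2 P2 B2 : valid m j1 P1 B1 -> valid m j2 P2 B2 ->
  gmap j1 P1 B1 = gmap j2 P2 B2 -> [/\ j1 = j2, P1 = P2 & B1 = B2].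
Proof.
move=> V1 V2 E.
have [D1 _] := G_P4 V1. have [D2 _] := G_P4 V2.
have Ej : j1 = j2 by rewrite -D1 E D2.
subst j2.
have [HR1s HR1z HR1b] := F_R V1. have [HR2s HR2z HR2b] := F_R V2.
have [Hd1s Hd1z Hd1b _ _] := F_d V1. have [Hd2s Hd2z Hd2b _ _] := F_d V2.
have [HD1s HD1z _ _] := F_D V1. have [HD2s HD2z _ _] := F_D V2.
move: E; rewrite !G_eq => -[Ec Etl].
have Ec1 : size B1 = size B2 by lia.
have Hsz : size [seq x + j1.+1 | x <- swR P1 (sig_of j1 B1) (ychoice P1 (sig_of j1 B1) (j1 - 2))] =
          size [seq x + j1.+1 | x <- swR P2 (sig_of j1 B2) (ychoice P2 (sig_of j1 B2) (j1 - 2))].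
  by rewrite !size_map HR1z HR2z.
have [ER EDt] := cat_inj Hsz Etl.
move/map_addn_inj: ER => ER.
move: EDt => [] EDt.
rewrite Ec1 in EDt Hd1b.
have Ed := Dt_inj Hd1s Hd2s (etrans Hd1z (esym Hd2z)) Hd1b Hd2b EDt.
have EDd : swD P1 (sig_of j1 B1) (ychoice P1 (sig_of j1 B1) (j1 - 2)) =
           swD P2 (sig_of j1 B2) (ychoice P2 (sig_of j1 B2) (j1 - 2)).
  by apply: dprime_inj Ed; [rewrite HD1z | rewrite HD2z].
have [_ _ HP1s _ [HB1s HB1b]] := V1.
have [_ _ HP2s _ [HB2s HB2b]] := V2.
have [EP ES] := sw_inj HP1s (sorted_sig j1 B1) (size_sig j1 B1) (V_r V1)
                       HP2s (sorted_sig j1 B2) (size_sig j1 B2) (V_r V2) ER EDd.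
split => //.
exact: (sig_inj HB1s HB2s Ec1 HB1b HB2b ES).
Qed.

Lemma mem_maxn (s : seq nat) x : x \in s -> x <= foldr maxn 0 s.
Proof. elim: s => //= a s IH; rewrite inE => /orP [/eqP ->|/IH]; lia. Qed.

Lemma Q4_dec m n l : Q4 m n l ->
  let j := durfee m l in
  valid m j [seq x - j.+1 | x <- take (m + j).-1 l] (drop (m + j).+1 l) /\
  l = rebuild j [seq x - j.+1 | x <- take (m + j).-1 l] (drop (m + j).+1 l) /\
  sumn l = n.
Proof.
rewrite /Q4 /Q /in_rankset /partition_of /is_part /dalpha /dbeta /smallest_ge2.
set j := durfee m l.
move=> /and5P [/andP [/andP [/andP [Hsort Hpos] /eqP Hsum] Hrank] Hj1 Hsz Ha0 /andP [Ha1 Hb2]].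
set s := [seq x - j | x <- take (m + j) l] in Hsz Ha0 Ha1.
have Hmax0 : 0 < foldr maxn 0 s.
  have Hmj : (0 == m + j) = false by apply/negbTE; rewrite eq_sym -lt0n; lia.
  by move: Ha0; rewrite nth_conj; case: ifP => // _; rewrite Hmj.
have Hc0 : count (fun x => 0 < x) s = m + j.
  by apply/eqP; move: Ha0; rewrite nth_conj Hmax0.
have Hsz1 : size s = minn (m + j) (size l) by rewrite /s size_map size_take_min.
have Hszs : size s = m + j.
  have := count_size (fun x => 0 < x) s; lia.
have Hszl : m + j <= size l by lia.
have Hnths : forall i, i < m + j -> nth 0 s i = nth 0 l i - j.
  move=> i Hi; rewrite /s (nth_map 0); last by rewrite size_take; case: ifP => *; lia.
  by rewrite nth_take.
have Hgt : forall i, i < m + j -> j < nth 0 l i.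
  move=> i Hi.
  have Hall : all (fun x => 0 < x) s by rewrite all_count Hc0 Hszs.
  have Hi' : i < size s by rewrite Hszs.
  have := (all_nthP 0 Hall) i Hi'.
  rewrite Hnths //; lia.
have Hle1 : nth 0 l (m + j).-1 <= j.+1.
  case: (leqP (nth 0 l (m + j).-1) j.+1) => // Hbig; exfalso.
  have Hall : all (fun x => 1 < x) s.
    apply/(all_nthP 0) => i; rewrite Hszs => Hi; rewrite Hnths //.
    have Hle : i <= (m + j).-1 by lia.
    have Hlt : (m + j).-1 < size l by lia.
    have := snth Hsort Hle Hlt; lia.
  have Hm2 : 1 < foldr maxn 0 s.
    have Hs0 : 0 < size s by rewrite Hszs; lia.
    have := mem_maxn (mem_nth 0 Hs0); move/allP: Hall => /(_ _ (mem_nth 0 Hs0)); lia.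
  move: Ha1; rewrite nth_conj Hm2 all_cnt // Hszs; lia.
have Ejm : nth 0 l (m + j).-1 = j.+1.
  have := Hgt (m + j).-1; lia.
have Hs0 : nth 0 l 0 - j <= foldr maxn 0 s.
  have Hs0 : 0 < size s by rewrite Hszs; lia.
  have := mem_maxn (mem_nth 0 Hs0); rewrite Hnths //; lia.
move: Hsz; rewrite size_conj size_drop => Hsz.
have Hlj : nth 0 l (m + j) <= j.
  case: (leqP (nth 0 l (m + j)) j) => // Hbig; exfalso.
  have := @durfee_max m l j.+1; rewrite -/j (_ : (m + j.+1).-1 = m + j); last lia.
  move=> H; have := H (ltac:(lia)) Hbig; lia.
have Ej : nth 0 l (m + j) = j.
  move: Hrank => /orP [Hl|/existsP [i /eqP Hi]]; first by lia.
  case: i Hi => i Hil /= Hi.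
  case: (ltnP i (m + j)) => Him.
  - have := Hgt i Him; lia.
  - have := snth Hsort Him Hil; lia.
have Hb2' : all (fun x => 2 <= x <= j) (drop (m + j).+1 l).
  apply/(all_nthP 0) => i; rewrite size_drop => Hi; rewrite nth_drop.
  have Hle : m + j <= (m + j).+1 + i by lia.
  have Hlt : (m + j).+1 + i < size l by lia.
  have := snth Hsort Hle Hlt; rewrite Ej => ->; rewrite andbT.
  move/(all_nthP 0): Hb2 => /(_ i.+1); rewrite size_drop nth_drop.
  rewrite (_ : m + j + i.+1 = (m + j).+1 + i); last lia.
  by apply; lia.
have Hj2 : 2 <= j.
  move/(all_nthP 0): Hb2 => /(_ 0); rewrite size_drop nth_drop addn0 Ej; apply; lia.
split; last split => //.
- split => //.
  + by rewrite size_map size_take_min; lia.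
  + apply: homo_sorted (take_sorted _ Hsort) => a b /=; lia.
  + apply/(all_nthP 0) => i; rewrite size_map size_take_min => Hi.
    rewrite (nth_map 0) ?size_take_min; last lia.
    rewrite nth_take; last lia.
    have Hle : 0 <= i by lia.
    have Hlt : i < size l by lia.
    have := snth Hsort Hle Hlt; rewrite size_drop; lia.
  + split; [exact: drop_sorted | exact: Hb2'].
- rewrite /rebuild -map_comp map_id_in; last first.
    move=> x Hx /=.
    move: Hx => /(nthP 0) [i Hi <-].
    rewrite size_take_min in Hi; have Hi' : i < (m + j).-1 by lia.
    rewrite /= nth_take //; have := Hgt i; lia.
  rewrite -{1}(cat_take_drop (m + j).-1 l); congr (_ ++ _).
  rewrite (drop_nth 0); last lia.
  rewrite (drop_nth 0); last lia.
  rewrite (_ : (m + j).-1.+1 = m + j); last lia.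
  by rewrite Ejm Ej.
Qed.

Theorem lemma4p5 (m n : nat) : 1 <= n ->
  exists f : seq nat -> seq nat,
    (forall l, Q4 m n l -> P4 m n (f l)) /\
    (forall l1 l2, Q4 m n l1 -> Q4 m n l2 -> f l1 = f l2 -> l1 = l2).
Proof.
move=> _; exists (fmap m); split.
- move=> l HQ; have [V [El Hs]] := Q4_dec HQ.
  have [_ HP] := G_P4 V.
  by rewrite -El Hs in HP; rewrite /fmap.
- move=> l1 l2 H1 H2 E.
  have [V1 [E1 _]] := Q4_dec H1; have [V2 [E2 _]] := Q4_dec H2.
  move: E; rewrite /fmap => E.
  have [Ej EP EB] := G_inj V1 V2 E.
  by rewrite [LHS]E1 [RHS]E2; congr rebuild.
Qed.
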